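(* Assume $\Phi_h=M_h=\mathbb{P}_1$. Then any solution $(\phi^{n+1},\mu^{n+1})$ of the J$_\varepsilon$-scheme satisfies $$\int_\Omega\big(I_h(\phi^{n+1}_-)\big)^2d\boldsymbol x\le C\sqrt{\varepsilon(1-\varepsilon)}\le C\sqrt{\varepsilon}\quad\text{and}\quad\int_\Omega\Big(I_h\big((\phi^{n+1}-1)_+\big)\Big)^2d\boldsymbol x\le C\sqrt{\varepsilon(1-\varepsilon)}\le C\sqrt{\varepsilon},$$ where $C$ depends on the initial energy $E(\phi^0)$ and on $\int_\Omega I_h(J_\varepsilon(\phi^0))\,d\boldsymbol x$.
   Context: $\Omega\subset\mathbb{R}^d$ ($d=1,2,3$) bounded, $\eta>0$, $\varepsilon\in(0,1/2)$. $f_-=\min\{f,0\}$, $f_+=\max\{f,0\}$. $F(\phi)=\frac1{4\eta^2}\phi^2(\phi-1)^2=F_c+F_e$ with $F_c(\phi)=\frac1{4\eta^2}(\phi^4-2\phi^3+\frac32\phi^2)$, $F_e(\phi)=-\frac1{8\eta^2}\phi^2$; $E(\phi)=\int_\Omega(\frac12|\nabla\phi|^2+F(\phi))d\boldsymbol x$. The interval $[0,T]$ is split into $N$ steps of size $\Delta t=T/N$, $n=0,\dots,N-1$. $\mathcal T_h$ is a structured triangulation of $\Omega$ in which every element $I$ has vertices $\boldsymbol x_0,\dots,\boldsymbol x_d$ with $\boldsymbol x_k-\boldsymbol x_0$ parallel to the $k$-th coordinate axis; $\Phi_h=M_h$ is the space of continuous piecewise $\mathbb{P}_1$ functions. $I_h$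 is nodal $\mathbb{P}_1$ interpolation, $(f,g)_h=\int_\Omega I_h(fg)\,d\boldsymbol x$, $(\cdot,\cdot)$ the $L^2$ product. $J(\phi)=(1-2\phi)\arcsin(\sqrt{1-\phi})+\sqrt{(1-\phi)\phi}+2\arcsin(\sqrt{1/2})\,\phi$ on $[0,1]$ (so $J''(\phi)=1/\sqrt{\phi(1-\phi)}$); $J_\varepsilon\in C^2(\mathbb{R})$ equals $J$ on $[\varepsilon,1-\varepsilon]$ and its second-order Taylor polynomial at $\varepsilon$ (resp. $1-\varepsilon$) for $\phi<\varepsilon$ (resp. $\phi>1-\varepsilon$). For $\phi\in\Phi_h$, $M^J_\varepsilon(\phi)$ is the piecewise constant diagonal matrix whose $k$-th entry on $I$ is $\Big(\frac{\phi(\boldsymbol x_k)-\phi(\boldsymbol x_0)}{J_\varepsilon'(\phi(\boldsymbol x_k))-J_\varepsilon'(\phi(\boldsymbol x_0))}\Big)^2$ if $\phi(\boldsymbol x_k)\neq\phi(\boldsymbol x_0)$ and $\big(1/J_\varepsilon''(\phi(\boldsymbol x_0))\big)^2$ otherwise. J$_\varepsilon$-scheme: given $\phi^n\in\Phi_h$ (starting from $\phi^0\in\Phi_h$), find $(\phi^{n+1},\mu^{n+1})\in\Phi_h\times M_h$ such that for all $(\bar\phi,\bar\mu)\in\Phi_h\times M_h$: $\frac1{\Delta t}(\phi^{n+1}-\phi^n,\bar\mu)_h+(M^J_\varepsilon(\phi^{n+1})\nabla\mu^{n+1},\nabla\bar\mu)=0$ and $(\nabla\phi^{n+1},\nabla\bar\phi)+(F_c'(\phi^{n+1})+F_e'(\phi^n),\bar\phi)=(\mu^{n+1},\bar\phi)_h$.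 *)

(* Defs.v *)
From Stdlib Require Import Reals Lra Lia.
From Coquelicot Require Import Coquelicot.
Open Scope R_scope.

Fixpoint rsum (n : nat) (f : nat -> R) : R :=
  match n with O => 0 | S m => rsum m f + f m end.
Fixpoint rprod (n : nat) (f : nat -> R) : R :=
  match n with O => 1 | S m => rprod m f * f m end.

(* Points of R^d are functions  nat -> R  (only coordinates 0..d-1 matter).
   node i c     : c-th coordinate of global node i  (i < nnodes)
   vtx e k      : global index of the k-th vertex x_k (k = 0..d) of element e
                  (e < nelems). *)
Record smesh (d : nat) : Type := SMesh {
  nnodes : nat;
  node : nat -> nat -> R;
  nelems : nat;
  vtx : nat -> nat -> nat }.
Arguments nnodes {d}. Arguments node {d}. Arguments nelems {d}. Arguments vtx {d}.

Section Mesh.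
Context {d : nat} (M : smesh d).

(* signed edge length  x_k - x_0  along the k-th axis (axis index k-1), k = 1..d *)
Definition step (e k : nat) : R :=
  node M (vtx M e k) (k - 1)%nat - node M (vtx M e 0%nat) (k - 1)%nat.

Definition is_vtx (e i : nat) : Prop := exists k, (k <= d)%nat /\ vtx M e k = i.

Definition in_elem (e : nat) (x : nat -> R) : Prop :=
  exists l : nat -> R, (forall k, (k <= d)%nat -> 0 <= l k) /\
    rsum (S d) l = 1 /\
    forall c, (c < d)%nat -> x c = rsum (S d) (fun k => l k * node M (vtx M e k) c).

Definition in_common_face (e1 e2 : nat) (x : nat -> R) : Prop :=
  exists l : nat -> R,
    (forall i, (i < nnodes M)%nat -> 0 <= l i) /\
    (forall i, (i < nnodes M)%nat -> l i <> 0 -> is_vtx e1 i /\ is_vtx e2 i) /\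
    rsum (nnodes M) l = 1 /\
    forall c, (c < d)%nat -> x c = rsum (nnodes M) (fun i => l i * node M i c).

(* Conforming structured triangulation: every element I has vertices
   x_0,...,x_d with x_k - x_0 parallel to the k-th coordinate axis (and nonzero);
   nodes are pairwise distinct and each is a vertex of some element;
   distinct elements are distinct simplices meeting face-to-face
   (their intersection is the convex hull of their common vertices). *)
Definition valid_mesh : Prop :=
  (forall e k, (e < nelems M)%nat -> (k <= d)%nat -> (vtx M e k < nnodes M)%nat) /\
  (forall e k, (e < nelems M)%nat -> (1 <= k <= d)%nat ->
      step e k <> 0 /\
      forall c, (c < d)%nat -> c <> (k - 1)%nat ->
        node M (vtx M e k) c = node M (vtx M e 0%nat) c) /\
  (forall i j, (i < nnodes M)%nat -> (j < nnodes M)%nat ->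
      (forall c, (c < d)%nat -> node M i c = node M j c) -> i = j) /\
  (forall i, (i < nnodes M)%nat -> exists e, (e < nelems M)%nat /\ is_vtx e i) /\
  (forall e1 e2, (e1 < nelems M)%nat -> (e2 < nelems M)%nat -> e1 <> e2 ->
      (exists k, (k <= d)%nat /\ ~ is_vtx e2 (vtx M e1 k)) /\
      (forall x, in_elem e1 x -> in_elem e2 x -> in_common_face e1 e2 x)).

(* Phi_h = M_h = continuous P1: a function is given by its nodal values
   v : nat -> R  (v i = value at global node i).                        *)

Definition loc (v : nat -> R) (e k : nat) : R := v (vtx M e k).

(* (constant) gradient of the P1 function v on element e, component c < d *)
Definition grad (v : nat -> R) (e c : nat) : R :=
  (loc v e (S c) - loc v e 0%nat) / step e (S c).

Definition p1 (v : nat -> R) (e : nat) (x : nat -> R) : R :=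
  loc v e 0%nat + rsum d (fun c => grad v e c * (x c - node M (vtx M e 0%nat) c)).

(* Integration.  sint m G r = integral of G over {t in R^m : t >= 0, sum t <= r}
   (iterated Riemann integrals). *)
Fixpoint sint (m : nat) (G : (nat -> R) -> R) (r : R) {struct m} : R :=
  match m with
  | O => G (fun _ => 0)
  | S m' => RInt (fun u =>
        sint m' (fun t => G (fun i => match i with O => u | S i' => t i' end)) (r - u))
        0 r
  end.

(* affine map of the reference simplex onto element e *)
Definition aff (e : nat) (t : nat -> R) : nat -> R :=
  fun c => node M (vtx M e 0%nat) c + t c * step e (S c).

(* integral over element e (change of variables to the reference simplex) *)
Definition elem_int (e : nat) (g : (nat -> R) -> R) : R :=
  Rabs (rprod d (fun c => step e (S c))) * sint d (fun t => g (aff e t)) 1.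

(* integral over Omega = union of the elements of a piecewise defined function:
   g e x is the function on element e *)
Definition omega_int (g : nat -> (nat -> R) -> R) : R :=
  rsum (nelems M) (fun e => elem_int e (g e)).

(* (f,g)_h = int_Omega I_h(f g) for nodal values f, g *)
Definition lumped (f g : nat -> R) : R :=
  omega_int (fun e x => p1 (fun i => f i * g i) e x).

End Mesh.

Definition Fpot (eta p : R) : R := / (4 * eta ^ 2) * p ^ 2 * (p - 1) ^ 2.
(* F_c'(p) and F_e'(p): derivatives of
   F_c = (p^4 - 2p^3 + 3/2 p^2)/(4 eta^2),  F_e = - p^2 / (8 eta^2) *)
Definition dFc (eta p : R) : R := / (4 * eta ^ 2) * (4 * p ^ 3 - 6 * p ^ 2 + 3 * p).
Definition dFe (eta p : R) : R := - / (4 * eta ^ 2) * p.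

Definition energy {d} (M : smesh d) (eta : R) (phi : nat -> R) : R :=
  omega_int M (fun e x =>
    / 2 * rsum d (fun c => grad M phi e c ^ 2) + Fpot eta (p1 M phi e x)).

Definition Jfun (p : R) : R :=
  (1 - 2 * p) * asin (sqrt (1 - p)) + sqrt ((1 - p) * p) + 2 * asin (sqrt (/ 2)) * p.

Definition Jeps (eps p : R) : R :=
  if Rlt_dec p eps then
    Jfun eps + Derive Jfun eps * (p - eps) + / 2 * Derive (Derive Jfun) eps * (p - eps) ^ 2
  else if Rlt_dec (1 - eps) p then
    Jfun (1 - eps) + Derive Jfun (1 - eps) * (p - (1 - eps))
      + / 2 * Derive (Derive Jfun) (1 - eps) * (p - (1 - eps)) ^ 2
  else Jfun p.

Definition dJeps (eps : R) : R -> R := Derive (Jeps eps).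
Definition ddJeps (eps : R) : R -> R := Derive (Derive (Jeps eps)).

(* diagonal entry c (axis c, i.e. vertex k = c+1) of M^J_eps(phi) on element e *)
Definition MJ {d} (M : smesh d) (eps : R) (phi : nat -> R) (e c : nat) : R :=
  let a := loc M phi e (S c) in
  let b := loc M phi e 0%nat in
  if Req_dec_T a b then (/ ddJeps eps b) ^ 2
  else ((a - b) / (dJeps eps a - dJeps eps b)) ^ 2.

Definition Jscheme {d} (M : smesh d) (eta eps dt : R) (phi0 phi1 mu1 : nat -> R) : Prop :=
  (forall mub : nat -> R,
     / dt * lumped M (fun i => phi1 i - phi0 i) mub
     + omega_int M (fun e _ =>
         rsum d (fun c => MJ M eps phi1 e c * grad M mu1 e c * grad M mub e c)) = 0) /\
  (forall phib : nat -> R,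
     omega_int M (fun e _ => rsum d (fun c => grad M phi1 e c * grad M phib e c))
     + omega_int M (fun e x =>
         (dFc eta (p1 M phi1 e x) + dFe eta (p1 M phi0 e x)) * p1 M phib e x)
     = lumped M mu1 phib).

(* Main.v *)
Require Import Defs.
From Stdlib Require Import Reals Lra Lia List FunctionalExtensionality.
From Coquelicot Require Import Coquelicot.
Open Scope R_scope.

Definition cons' (u : R) (t : nat -> R) : nat -> R :=
  fun i => match i with O => u | S i' => t i' end.

Inductive ipoly : ((nat -> R) -> R) -> Prop :=
| poly_c c : ipoly (fun _ => c)
| poly_v i : ipoly (fun t => t i)
| poly_add G H : ipoly G -> ipoly H -> ipoly (fun t => G t + H t)
| poly_mul G H : ipoly G -> ipoly H -> ipoly (fun t => G t * H t)
| poly_opp G : ipoly G -> ipoly (fun t => - G t).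

Lemma poly_shift G u : ipoly G -> ipoly (fun t => G (cons' u t)).
Proof.
  induction 1.
  - apply poly_c.
  - destruct i; simpl. apply poly_c. apply poly_v.
  - apply poly_add; auto.
  - apply poly_mul; auto.
  - apply poly_opp; auto.
Qed.

Definition sumL (u : R) (t : nat -> R) (l : list (nat * ((nat -> R) -> R))) : R :=
  fold_right (fun p acc => u ^ (fst p) * snd p t + acc) 0 l.

Lemma sumL_app u t l1 l2 : sumL u t (l1 ++ l2) = sumL u t l1 + sumL u t l2.
Proof. induction l1; simpl. ring. unfold sumL in *; simpl; rewrite IHl1; ring. Qed.

Definition mulL (l1 l2 : list (nat * ((nat -> R) -> R))) :=
  flat_map (fun p => map (fun q => ((fst p + fst q)%nat, fun t => snd p t * snd q t)) l2) l1.

Lemma sumL_map u t a H l2 :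
  sumL u t (map (fun q => ((a + fst q)%nat, fun t => H t * snd q t)) l2) = u ^ a * H t * sumL u t l2.
Proof. induction l2; simpl. ring. unfold sumL in *; simpl; rewrite IHl2, pow_add; ring. Qed.

Lemma sumL_mul u t l1 l2 : sumL u t (mulL l1 l2) = sumL u t l1 * sumL u t l2.
Proof.
  induction l1; simpl. unfold sumL; simpl; ring.
  unfold mulL in *; simpl. rewrite sumL_app, IHl1, sumL_map. unfold sumL; simpl; ring.
Qed.

Definition oppL (l : list (nat * ((nat -> R) -> R))) :=
  map (fun p => (fst p, fun t => - snd p t)) l.
Lemma sumL_opp u t l : sumL u t (oppL l) = - sumL u t l.
Proof. induction l; unfold sumL in *; simpl. ring. rewrite IHl; ring. Qed.

Lemma poly_decomp G : ipoly G -> exists l, List.Forall (fun p => ipoly (snd p)) l /\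
  forall u t, G (cons' u t) = sumL u t l.
Proof.
  induction 1.
  - exists ((0%nat, fun _ => c) :: nil). split. { constructor; [simpl; constructor | constructor]. }
    intros; unfold sumL; simpl. ring.
  - destruct i.
    + exists ((1%nat, fun _ => 1) :: nil). split. { constructor; [simpl; constructor | constructor]. }
      intros; unfold sumL; simpl; ring.
    + exists ((0%nat, fun t => t i) :: nil). split. { constructor; [simpl; constructor | constructor]. }
      intros; unfold sumL; simpl; ring.
  - destruct IHipoly1 as [l1 [F1 E1]], IHipoly2 as [l2 [F2 E2]].
    exists (l1 ++ l2). split. apply Forall_app; auto.
    intros; rewrite sumL_app, E1, E2; auto.
  - destruct IHipoly1 as [l1 [F1 E1]], IHipoly2 as [l2 [F2 E2]].
    exists (mulL l1 l2). split.
    + unfold mulL. rewrite Forall_forall. intros x Hx.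
      apply in_flat_map in Hx. destruct Hx as [p [Hp Hx]].
      apply in_map_iff in Hx. destruct Hx as [q [Hq Hq']]. subst x. simpl.
      rewrite Forall_forall in F1, F2. apply poly_mul; [apply (F1 p) | apply (F2 q)]; auto.
    + intros; rewrite sumL_mul, E1, E2; auto.
  - destruct IHipoly as [l [F E]]. exists (oppL l). split.
    + unfold oppL. rewrite Forall_forall in *. intros x Hx.
      apply in_map_iff in Hx. destruct Hx as [p [Hp Hp']]. subst x; simpl.
      apply poly_opp, F; auto.
    + intros; rewrite sumL_opp, E; auto.
Qed.

Inductive P1 : (R -> R) -> Prop :=
| P1_m c N : P1 (fun s => c * s ^ N)
| P1_add f g : P1 f -> P1 g -> P1 (fun s => f s + g s).

Lemma P1_cont f : P1 f -> forall x : R, continuous f x.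
Proof.
  induction 1; intros x.
  - apply (ex_derive_continuous (fun s => c * s ^ N)). auto_derive. auto.
  - apply (continuous_plus f g); auto.
Qed.

Lemma P1_ext f g : P1 f -> (forall s, f s = g s) -> P1 g.
Proof. intros H E. replace g with f. auto. apply functional_extensionality; auto. Qed.

Lemma cont_pow_mul (a : nat) (f : R -> R) s (x : R) : (forall y : R, continuous f y) ->
  continuous (fun u => u ^ a * f (s - u)) x.
Proof.
  intros Hf. apply (continuous_mult (fun u => u ^ a) (fun u => f (s - u))).
  apply (ex_derive_continuous (fun u => u ^ a)); auto_derive; auto.
  apply (continuous_comp (fun u => s - u) f). apply (ex_derive_continuous (fun u => s - u)); auto_derive; auto.
  apply Hf.
Qed.

Lemma exRInt_cont (f : R -> R) a b : (forall x : R, continuous f x) -> ex_RInt f a b.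
Proof. intros H; apply (ex_RInt_continuous (V:=R_CompleteNormedModule)); intros; apply H. Qed.

Lemma exRInt_poly (f : R -> R) a b : (forall x : R, ex_derive f x) -> ex_RInt f a b.
Proof. intros H; apply exRInt_cont; intros; apply (ex_derive_continuous (V:=R_NormedModule)); apply H. Qed.

Lemma exRInt_pow_mul (a : nat) (f : R -> R) s p q : (forall y, continuous f y) ->
  ex_RInt (fun u => u ^ a * f (s - u)) p q.
Proof. intros; apply exRInt_cont; intros; apply cont_pow_mul; auto. Qed.

Lemma L1 q : P1 q -> forall a, P1 (fun s => RInt (fun u => u ^ a * q (s - u)) 0 s).
Proof.
  induction 1; intros a.
  - set (B := RInt (fun v => v ^ a * (1 - v) ^ N) 0 1).
    apply P1_ext with (fun s => (c * B) * s ^ (a + N + 1)). apply P1_m.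
    intros s.
    assert (E := RInt_comp_lin (fun u => u ^ a * (c * (s - u) ^ N)) s 0 0 1).
    replace (s * 0 + 0) with 0 in E by ring. replace (s * 1 + 0) with s in E by ring.
    rewrite <- E.
    2:{ apply exRInt_poly; intros; auto_derive; auto. }
    rewrite (RInt_ext (V:=R_CompleteNormedModule) _ (fun y => scal (s ^ (a + N + 1) * c) (y ^ a * (1 - y) ^ N))).
    rewrite (RInt_scal (V:=R_CompleteNormedModule)). unfold B. change (scal (s ^ (a + N + 1) * c) (RInt (fun v : R => v ^ a * (1 - v) ^ N) 0 1)) with ((s ^ (a + N + 1) * c) * (RInt (fun v : R => v ^ a * (1 - v) ^ N) 0 1)). ring.
    apply exRInt_poly; intros; auto_derive; auto.
    intros x _. change (s * ((s * x + 0) ^ a * (c * (s - (s * x + 0)) ^ N)) = s ^ (a + N + 1) * c * (x ^ a * (1 - x) ^ N)).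
    replace (s * x + 0) with (s * x) by ring. replace (s - s * x) with (s * (1 - x)) by ring.
    rewrite !Rpow_mult_distr, !pow_add. ring.
  - apply P1_ext with (fun s => RInt (fun u => u ^ a * f (s - u)) 0 s + RInt (fun u => u ^ a * g (s - u)) 0 s).
    apply P1_add; auto.
    intros s. rewrite <- (RInt_plus (fun u => u ^ a * f (s - u)) (fun u => u ^ a * g (s - u))).
    apply RInt_ext. intros; change (x ^ a * f (s - x) + x ^ a * g (s - x) = x ^ a * (f (s - x) + g (s - x))). ring.
    apply exRInt_pow_mul; apply P1_cont; auto.
    apply exRInt_pow_mul; apply P1_cont; auto.
Qed.

Definition foldS (u s : R) (l : list (nat * (R -> R))) : R :=
  fold_right (fun p acc => u ^ (fst p) * snd p s + acc) 0 l.

Lemma foldS_cont l : List.Forall (fun p => forall y : R, continuous (snd p) y) l ->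
  forall s (z : R), continuous (fun u => foldS u (s - u) l) z.
Proof.
  induction 1; intros s z; simpl.
  - apply continuous_const.
  - apply (continuous_plus (fun u => u ^ fst x * snd x (s - u)) (fun u => foldS u (s - u) l)).
    apply cont_pow_mul; auto. apply IHForall.
Qed.

Lemma P1_zero : P1 (fun _ => 0).
Proof. apply P1_ext with (fun s => 0 * s ^ 0). apply P1_m. intros; ring. Qed.

Lemma P1_foldRInt l : List.Forall (fun p => P1 (snd p)) l ->
  P1 (fun s => RInt (fun u => foldS u (s - u) l) 0 s).
Proof.
  induction 1; simpl.
  - apply P1_ext with (fun _ => 0). apply P1_zero. intros s.
    rewrite (RInt_const (V:=R_CompleteNormedModule)). change (0 = (s - 0) * 0). ring.
  - apply P1_ext with (fun s => RInt (fun u => u ^ fst x * snd x (s - u)) 0 s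
                              + RInt (fun u => foldS u (s - u) l) 0 s).
    apply P1_add; auto. apply L1; auto.
    intros s. rewrite <- (RInt_plus (V:=R_CompleteNormedModule) (fun u => u ^ fst x * snd x (s - u))).
    reflexivity.
    apply exRInt_pow_mul. apply P1_cont; auto.
    apply exRInt_cont. apply foldS_cont. 
    eapply Forall_impl; [| apply H0]. intros p Hp; apply P1_cont; auto.
Qed.

Lemma poly_sumL u l : List.Forall (fun p => ipoly (snd p)) l -> ipoly (fun t => sumL u t l).
Proof.
  induction 1; simpl.
  - apply poly_c.
  - apply (poly_add (fun t => u ^ fst x * snd x t) (fun t => sumL u t l)); auto.
    apply (poly_mul (fun _ => u ^ fst x)); auto. apply poly_c.
Qed.

Fixpoint inS (m : nat) (r : R) (t : nat -> R) : Prop :=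
  match m with
  | O => t = (fun _ => 0)
  | S m' => exists u t', 0 <= u <= r /\ inS m' (r - u) t' /\ t = cons' u t'
  end.

Lemma sint_main m :
 (forall G, ipoly G -> P1 (sint m G)) /\
 (forall G H r, ipoly G -> ipoly H -> sint m (fun t => G t + H t) r = sint m G r + sint m H r) /\
 (forall G c r, ipoly G -> sint m (fun t => c * G t) r = c * sint m G r) /\
 (forall G H r, ipoly G -> ipoly H -> 0 <= r -> (forall t, inS m r t -> G t <= H t) ->
    sint m G r <= sint m H r).
Proof.
  induction m as [|m IH].
  - simpl. split; [|split; [|split]].
    + intros G _. apply P1_ext with (fun s => G (fun _ => 0) * s ^ 0). apply P1_m. intros; ring.
    + reflexivity.
    + reflexivity.
    + intros G H r _ _ _ Hle. apply Hle. reflexivity.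
  - destruct IH as [IP [IA [IS IM]]].
    assert (Z : forall s, sint m (fun _ => 0) s = 0).
    { intros s. replace (fun _ : nat -> R => 0) with (fun t : nat -> R => 0 * (fun _ : nat -> R => 0) t).
      rewrite IS. ring. apply poly_c. apply functional_extensionality; intros; ring. }
    assert (SL : forall u s l, List.Forall (fun p => ipoly (snd p)) l ->
       sint m (fun t => sumL u t l) s = foldS u s (map (fun p => (fst p, sint m (snd p))) l)).
    { intros u s l Hl. induction Hl; simpl.
      - apply Z.
      - change (sint m (fun t => u ^ fst x * snd x t + sumL u t l) s =
                u ^ fst x * sint m (snd x) s + foldS u s (map (fun p => (fst p, sint m (snd p))) l)).
        rewrite (IA (fun t => u ^ fst x * snd x t) (fun t => sumL u t l)).
        rewrite (IS (snd x)). rewrite IHHl. reflexivity. auto.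
        apply (poly_mul (fun _ => u ^ fst x)); auto. apply poly_c.
        apply poly_sumL; auto. }
    assert (DEC : forall G, ipoly G -> exists l, List.Forall (fun p => P1 (snd p)) l /\
       (fun s => sint (S m) G s) = (fun s => RInt (fun u => foldS u (s - u) l) 0 s) /\
       forall r, (fun u => sint m (fun t => G (cons' u t)) (r - u)) = (fun u => foldS u (r - u) l)).
    { intros G HG. destruct (poly_decomp G HG) as [l [Fl El]].
      exists (map (fun p => (fst p, sint m (snd p))) l).
      assert (E2 : forall r, (fun u => sint m (fun t => G (cons' u t)) (r - u)) =
                      (fun u => foldS u (r - u) (map (fun p => (fst p, sint m (snd p))) l))).
      { intros r. apply functional_extensionality. intros u. rewrite <- SL; auto.
        f_equal. apply functional_extensionality. intros t. apply El. }
      split; [|split].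
      - rewrite Forall_forall in *. intros x Hx. apply in_map_iff in Hx.
        destruct Hx as [p [Hp Hp']]. subst x. simpl. apply IP. apply Fl; auto.
      - apply functional_extensionality. intros s. simpl.
        change (RInt (fun u => sint m (fun t => G (cons' u t)) (s - u)) 0 s =
                RInt (fun u => foldS u (s - u) (map (fun p => (fst p, sint m (snd p))) l)) 0 s).
        rewrite E2. reflexivity.
      - apply E2. }
    assert (EX : forall G r a b, ipoly G -> ex_RInt (fun u => sint m (fun t => G (cons' u t)) (r - u)) a b).
    { intros G r a b HG. destruct (DEC G HG) as [l [Fl [_ E]]]. rewrite E.
      apply exRInt_cont. apply foldS_cont.
      eapply Forall_impl; [| apply Fl]. intros p Hp; apply P1_cont; auto. }
    split; [|split; [|split]].
    + intros G HG. destruct (DEC G HG) as [l [Fl [E _]]].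
      apply P1_ext with (fun s => RInt (fun u => foldS u (s - u) l) 0 s).
      apply P1_foldRInt; auto. intros s. change ((fun s => RInt (fun u => foldS u (s - u) l) 0 s) s = sint (S m) G s).
      rewrite <- E. reflexivity.
    + intros G H r HG HH. simpl.
      change (RInt (fun u => sint m (fun t => G (cons' u t) + H (cons' u t)) (r - u)) 0 r =
              RInt (fun u => sint m (fun t => G (cons' u t)) (r - u)) 0 r +
              RInt (fun u => sint m (fun t => H (cons' u t)) (r - u)) 0 r).
      rewrite <- (RInt_plus (V:=R_CompleteNormedModule)); [|apply EX; auto|apply EX; auto].
      apply RInt_ext. intros u _. apply IA; apply poly_shift; auto.
    + intros G c r HG. simpl.
      change (RInt (fun u => sint m (fun t => c * G (cons' u t)) (r - u)) 0 r =
              c * RInt (fun u => sint m (fun t => G (cons' u t)) (r - u)) 0 r).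
      rewrite <- (RInt_scal (V:=R_CompleteNormedModule)); [|apply EX; auto].
      apply RInt_ext. intros u _. apply IS; apply poly_shift; auto.
    + intros G H r HG HH Hr Hle. simpl.
      change (RInt (fun u => sint m (fun t => G (cons' u t)) (r - u)) 0 r <=
              RInt (fun u => sint m (fun t => H (cons' u t)) (r - u)) 0 r).
      apply RInt_le; auto; try (apply EX; auto).
      intros u Hu. apply IM; try (apply poly_shift; auto). lra.
      intros t Ht. apply Hle. simpl. exists u, t. split. lra. split; auto.
Qed.

Lemma rsum_ext n f g : (forall i, (i < n)%nat -> f i = g i) -> rsum n f = rsum n g.
Proof. induction n; simpl; intros H; auto. rewrite IHn, H; auto. Qed.
Lemma rsum_add n f g : rsum n (fun i => f i + g i) = rsum n f + rsum n g.
Proof. induction n; simpl. ring. rewrite IHn; ring. Qed.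
Lemma rsum_scal n c f : rsum n (fun i => c * f i) = c * rsum n f.
Proof. induction n; simpl. ring. rewrite IHn; ring. Qed.
Lemma rsum_le n f g : (forall i, (i < n)%nat -> f i <= g i) -> rsum n f <= rsum n g.
Proof. induction n; simpl; intros H. lra. apply Rplus_le_compat; auto. Qed.
Lemma rsum_S0 n f : rsum (S n) f = f O + rsum n (fun i => f (S i)).
Proof. induction n; simpl in *. ring. rewrite IHn; ring. Qed.

Lemma inS_prop m : forall r t, 0 <= r -> inS m r t ->
  (forall i, (i < m)%nat -> 0 <= t i) /\ rsum m t <= r.
Proof.
  induction m; intros r t Hr H; simpl in H.
  - split. intros; lia. simpl; lra.
  - destruct H as [u [t' [Hu [Ht E]]]]. subst t.
    destruct (IHm (r - u) t') as [H1 H2]; auto. lra.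
    split.
    + intros [|i] Hi; simpl. lra. apply H1; lia.
    + rewrite rsum_S0. simpl. change (rsum m (fun i => t' i)) with (rsum m t'). lra.
Qed.

Lemma sint_add m G H r : ipoly G -> ipoly H -> sint m (fun t => G t + H t) r = sint m G r + sint m H r.
Proof. apply (sint_main m). Qed.
Lemma sint_scal m G c r : ipoly G -> sint m (fun t => c * G t) r = c * sint m G r.
Proof. apply (sint_main m). Qed.
Lemma sint_mono m G H r : ipoly G -> ipoly H -> 0 <= r -> (forall t, inS m r t -> G t <= H t) ->
    sint m G r <= sint m H r.
Proof. apply (sint_main m). Qed.

Lemma poly_sub G H : ipoly G -> ipoly H -> ipoly (fun t => G t - H t).
Proof. intros; apply (poly_add G (fun t => - H t)); auto. apply poly_opp; auto. Qed.
Lemma poly_pow G n : ipoly G -> ipoly (fun t => G t ^ n).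
Proof. intros HG; induction n; simpl. apply poly_c. apply (poly_mul G (fun t => G t ^ n)); auto. Qed.
Lemma poly_rsum n F : (forall c, ipoly (fun t => F c t)) -> ipoly (fun t => rsum n (fun c => F c t)).
Proof. intros HF; induction n; simpl. apply poly_c. apply (poly_add (fun t => rsum n (fun c => F c t)) (F n)); auto. Qed.
Lemma poly_divc G c : ipoly G -> ipoly (fun t => G t / c).
Proof. intros; apply (poly_mul G (fun _ => / c)); auto. apply poly_c. Qed.

Ltac solve_poly :=
  repeat (first [ apply poly_c | apply poly_v | apply poly_rsum; intro
                | apply poly_sub | apply poly_add | apply poly_mul | apply poly_opp
                | apply poly_pow | apply poly_divc ]).

Section Mesh.
Context {d : nat} (M : smesh d).

Definition goodI (g : nat -> (nat -> R) -> R) := forall e, ipoly (fun t => g e (aff M e t)).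

Lemma poly_p1 v e : ipoly (fun t => p1 M v e (aff M e t)).
Proof. unfold p1, aff. solve_poly. Qed.

Lemma omega_add f g : goodI f -> goodI g ->
  omega_int M (fun e x => f e x + g e x) = omega_int M f + omega_int M g.
Proof.
  intros Hf Hg. unfold omega_int. rewrite <- rsum_add. apply rsum_ext. intros e _.
  unfold elem_int. rewrite sint_add; auto. ring.
Qed.

Lemma omega_scal f c : goodI f -> omega_int M (fun e x => c * f e x) = c * omega_int M f.
Proof.
  intros Hf. unfold omega_int. rewrite <- rsum_scal. apply rsum_ext. intros e _.
  unfold elem_int. rewrite sint_scal; auto. ring.
Qed.

Lemma omega_mono f g : goodI f -> goodI g ->
  (forall e t, (e < nelems M)%nat -> inS d 1 t -> f e (aff M e t) <= g e (aff M e t)) ->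
  omega_int M f <= omega_int M g.
Proof.
  intros Hf Hg H. unfold omega_int. apply rsum_le. intros e He.
  unfold elem_int. apply Rmult_le_compat_l. apply Rabs_pos.
  apply sint_mono; auto. lra.
Qed.

Lemma omega_zero : omega_int M (fun _ _ => 0) = 0.
Proof.
  replace (fun (_ : nat) (_ : nat -> R) => 0) with (fun (e : nat) (x : nat -> R) => 0 * (fun _ _ => 0) e x).
  rewrite omega_scal. ring. intros e; apply poly_c.
  apply functional_extensionality; intros; apply functional_extensionality; intros; ring.
Qed.

Lemma omega_nonneg f : goodI f ->
  (forall e t, (e < nelems M)%nat -> inS d 1 t -> 0 <= f e (aff M e t)) -> 0 <= omega_int M f.
Proof. intros Hf H. rewrite <- omega_zero. apply omega_mono; auto. intros e; apply poly_c. Qed.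

Lemma p1_add v w e x : p1 M (fun i => v i + w i) e x = p1 M v e x + p1 M w e x.
Proof.
  unfold p1.
  rewrite (rsum_ext d _ (fun c => grad M v e c * (x c - node M (vtx M e 0%nat) c) +
                                  grad M w e c * (x c - node M (vtx M e 0%nat) c))).
  rewrite rsum_add. unfold loc; ring.
  intros; unfold grad, loc, Rdiv; ring.
Qed.
Lemma p1_scal c v e x : p1 M (fun i => c * v i) e x = c * p1 M v e x.
Proof.
  unfold p1, grad, loc. rewrite Rmult_plus_distr_l. rewrite <- rsum_scal. f_equal.
  apply rsum_ext; intros; unfold Rdiv; ring.
Qed.
Lemma p1_sub v w e x : p1 M (fun i => v i - w i) e x = p1 M v e x - p1 M w e x.
Proof.
  unfold Rminus. rewrite p1_add.
  replace (fun i => - w i) with (fun i => -1 * w i). rewrite p1_scal. ring.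
  apply functional_extensionality; intros; ring.
Qed.

Hypothesis HM : valid_mesh M.

Lemma p1_bary v e t : (e < nelems M)%nat ->
  p1 M v e (aff M e t) = loc M v e 0%nat + rsum d (fun c => (loc M v e (S c) - loc M v e 0%nat) * t c).
Proof.
  intros He. unfold p1. f_equal. apply rsum_ext. intros c Hc.
  destruct HM as [_ [H2 _]]. destruct (H2 e (S c) He) as [Hs _]. lia.
  unfold grad, aff. field. auto.
Qed.

Lemma p1_mono v w e t : (e < nelems M)%nat -> inS d 1 t -> (forall i, v i <= w i) ->
  p1 M v e (aff M e t) <= p1 M w e (aff M e t).
Proof.
  intros He Ht Hvw. destruct (inS_prop d 1 t) as [Ht1 Ht2]; auto. lra.
  rewrite !p1_bary; auto.
  assert (E : forall u : nat -> R, loc M u e 0%nat + rsum d (fun c => (loc M u e (S c) - loc M u e 0%nat) * t c)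
      = loc M u e 0%nat * (1 - rsum d t) + rsum d (fun c => t c * loc M u e (S c))).
  { intros u. replace (rsum d (fun c => (loc M u e (S c) - loc M u e 0%nat) * t c)) with
      (rsum d (fun c => t c * loc M u e (S c)) + (- loc M u e 0%nat) * rsum d t). ring.
    rewrite <- rsum_scal, <- rsum_add. apply rsum_ext; intros; ring. }
  rewrite !E. apply Rplus_le_compat.
  apply Rmult_le_compat_r. lra. apply Hvw.
  apply rsum_le. intros c Hc. apply Rmult_le_compat_l. auto. apply Hvw.
Qed.

Lemma p1_bary2 v e t : (e < nelems M)%nat ->
  p1 M v e (aff M e t) = loc M v e 0%nat * (1 - rsum d t) + rsum d (fun c => t c * loc M v e (S c)).
Proof.
  intros He. rewrite p1_bary; auto.
  replace (rsum d (fun c => (loc M v e (S c) - loc M v e 0%nat) * t c)) with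
      (rsum d (fun c => t c * loc M v e (S c)) + (- loc M v e 0%nat) * rsum d t). ring.
  rewrite <- rsum_scal, <- rsum_add. apply rsum_ext; intros; ring.
Qed.

End Mesh.

Lemma wcs n w x : (forall i, (i < n)%nat -> 0 <= w i) ->
  0 <= rsum n (fun i => w i * x i ^ 2) /\
  (rsum n (fun i => w i * x i)) ^ 2 <= rsum n w * rsum n (fun i => w i * x i ^ 2).
Proof.
  induction n; intros Hw; cbn [rsum].
  - lra.
  - destruct IHn as [H1 H2]. intros; apply Hw; lia.
    assert (Hn : 0 <= w n) by (apply Hw; lia).
    set (A := rsum n w) in *. set (B := rsum n (fun i => w i * x i)) in *.
    set (C := rsum n (fun i => w i * x i ^ 2)) in *.
    assert (HA : 0 <= A). { unfold A. clear -Hw. assert (forall i, (i < n)%nat -> 0 <= w i) by (intros; apply Hw; lia).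
      clear Hw. induction n; simpl. lra. assert (0 <= w n) by (apply H; lia). assert (0 <= rsum n w) by (apply IHn; intros; apply H; lia). lra. }
    pose proof (pow2_ge_0 (x n)). split. apply Rplus_le_le_0_compat; auto; apply Rmult_le_pos; auto.
    assert (K : 0 <= A * x n ^ 2 + C - 2 * B * x n).
    { destruct (Req_dec A 0) as [HA0|HA0].
      - assert (HB0 : B = 0) by (rewrite HA0 in H2; nra). rewrite HA0, HB0. lra.
      - assert (0 < A) by lra.
        assert (E : A * (A * x n ^ 2 + C - 2 * B * x n) = (A * x n - B) ^ 2 + (A * C - B ^ 2)) by ring.
        assert (E2 : 0 <= A * (A * x n ^ 2 + C - 2 * B * x n)).
        { rewrite E. apply Rplus_le_le_0_compat. apply pow2_ge_0. lra. }
        apply (Rmult_le_reg_l A). lra. lra. }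
    assert (E3 : (B + w n * x n) ^ 2 = B ^ 2 + w n * (2 * B * x n) + w n * (w n * x n ^ 2)) by ring.
    assert (E4 : (A + w n) * (C + w n * x n ^ 2) = A * C + w n * (A * x n ^ 2 + C) + w n * (w n * x n ^ 2)) by ring.
    rewrite E3, E4.
    assert (w n * (2 * B * x n) <= w n * (A * x n ^ 2 + C)) by (apply Rmult_le_compat_l; lra).
    lra.
Qed.

Lemma jensen_bary n (a : R) (t x : nat -> R) :
  (forall i, (i < n)%nat -> 0 <= t i) -> rsum n t <= 1 ->
  (a * (1 - rsum n t) + rsum n (fun c => t c * x c)) ^ 2 <=
  a ^ 2 * (1 - rsum n t) + rsum n (fun c => t c * x c ^ 2).
Proof.
  intros Ht H1. destruct (wcs n t x Ht) as [HC HB].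
  set (A := rsum n t) in *. set (B := rsum n (fun i => t i * x i)) in *.
  set (C := rsum n (fun i => t i * x i ^ 2)) in *.
  set (l := 1 - A).
  assert (HA : 0 <= A). { unfold A. clear -Ht. induction n; simpl. lra.
     assert (0 <= t n) by (apply Ht; lia). assert (0 <= rsum n t) by (apply IHn; intros; apply Ht; lia). lra. }
  assert (Hl : 0 <= l) by (unfold l; lra).
  assert (X : 0 <= l * A * a ^ 2 + C - 2 * l * a * B - B ^ 2).
  { destruct (Req_dec A 0) as [HA0|HA0].
    - assert (HB0 : B = 0) by (rewrite HA0 in HB; nra). rewrite HA0, HB0. nra.
    - assert (0 < A) by lra.
      assert (E : A * (l * A * a ^ 2 + C - 2 * l * a * B - B ^ 2) = l * (A * a - B) ^ 2 + (A * C - B ^ 2) - B^2 * (A + l - 1)) by ring.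
      assert (E1 : A + l - 1 = 0) by (unfold l; ring).
      rewrite E1, Rmult_0_r, Rminus_0_r in E.
      assert (E2 : 0 <= A * (l * A * a ^ 2 + C - 2 * l * a * B - B ^ 2)).
      { rewrite E. apply Rplus_le_le_0_compat. apply Rmult_le_pos; auto; apply pow2_ge_0. lra. }
      apply (Rmult_le_reg_l A). lra. lra. }
  assert (E5 : A = 1 - l) by (unfold l; ring).
  assert (E6 : (a * l + B) ^ 2 = l * l * a ^ 2 + 2 * l * a * B + B ^ 2) by ring.
  change (1 - A) with l. rewrite E6.
  assert (E7 : a ^ 2 * l = l * l * a ^ 2 + l * A * a ^ 2) by (rewrite E5; ring).
  rewrite E7. lra.
Qed.

Lemma p1_jensen {d} (M : smesh d) (HM : valid_mesh M) v e t : (e < nelems M)%nat -> inS d 1 t ->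
  (p1 M v e (aff M e t)) ^ 2 <= p1 M (fun i => v i ^ 2) e (aff M e t).
Proof.
  intros He Ht. destruct (inS_prop d 1 t) as [Ht1 Ht2]; auto. lra.
  rewrite !p1_bary2; auto. unfold loc.
  exact (jensen_bary d (v (vtx M e 0%nat)) t (fun c => v (vtx M e (S c))) Ht1 Ht2).
Qed.

Lemma rsum_zero n : rsum n (fun _ => 0) = 0.
Proof. induction n; simpl; auto. rewrite IHn; ring. Qed.
Lemma rsum_nonneg n f : (forall i, (i < n)%nat -> 0 <= f i) -> 0 <= rsum n f.
Proof. intros H. rewrite <- (rsum_zero n). apply rsum_le; auto. Qed.

Definition c0 := asin (sqrt (/ 2)).
Definition Af p := asin (sqrt (1 - p)).
Definition D1 p := -2 * Af p + 2 * c0.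
Definition D2 p := / sqrt (p * (1 - p)).

Lemma asin_deriv y : -1 < y < 1 -> is_derive asin y (/ sqrt (1 - y ^ 2)).
Proof.
  intros H. apply is_derive_Reals. apply derive_pt_eq_1 with (derivable_pt_asin y H).
  rewrite derive_pt_asin. unfold Rsqr. replace (y ^ 2) with (y * y) by ring. field.
  apply Rgt_not_eq, sqrt_lt_R0. nra.
Qed.

Lemma Af_deriv p : 0 < p < 1 -> is_derive Af p (- / (2 * sqrt p * sqrt (1 - p))).
Proof.
  intros Hp.
  assert (Q1 : 0 < sqrt (1 - p)) by (apply sqrt_lt_R0; lra).
  assert (Q2 : 0 < sqrt p) by (apply sqrt_lt_R0; lra).
  assert (Q3 : sqrt (1 - p) < 1).
  { pose proof (sqrt_lt_1_alt (1 - p) 1 ltac:(lra)) as X. rewrite sqrt_1 in X. exact X. }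
  assert (H1 : is_derive (fun p => sqrt (1 - p)) p (- / (2 * sqrt (1 - p)))).
  { auto_derive. lra. unfold Rminus; ring. }
  assert (H2 : is_derive asin (sqrt (1 - p)) (/ sqrt p)).
  { replace (/ sqrt p) with (/ sqrt (1 - sqrt (1 - p) ^ 2)). apply asin_deriv. lra.
    rewrite pow2_sqrt by lra. f_equal. f_equal. ring. }
  pose proof (is_derive_comp asin (fun p => sqrt (1 - p)) p _ _ H2 H1) as H3.
  unfold Af. replace (- / (2 * sqrt p * sqrt (1 - p))) with (scal (- / (2 * sqrt (1 - p))) (/ sqrt p)).
  exact H3. change (- / (2 * sqrt (1 - p)) * / sqrt p = - / (2 * sqrt p * sqrt (1 - p))).
  field. lra.
Qed.

Lemma sq_pos p : 0 < p < 1 -> 0 < sqrt p /\ 0 < sqrt (1 - p).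
Proof. intros; split; apply sqrt_lt_R0; lra. Qed.

Lemma J_deriv p : 0 < p < 1 -> is_derive Jfun p (D1 p).
Proof.
  intros Hp. destruct (sq_pos p Hp) as [Q1 Q2].
  apply (is_derive_ext (fun p => (1 - 2 * p) * Af p + sqrt ((1 - p) * p) + 2 * c0 * p)).
  { intros; unfold Jfun, Af, c0; reflexivity. }
  auto_derive.
  - repeat split; try nra. exists (- / (2 * sqrt p * sqrt (1 - p))). apply Af_deriv; auto.
  - change (Derive (fun x => Af x) p) with (Derive Af p); rewrite (is_derive_unique _ _ _ (Af_deriv p Hp)).
    replace (1 + - p) with (1 - p) by ring. rewrite sqrt_mult by lra.
    unfold D1. field. lra.
Qed.

Lemma D1_deriv p : 0 < p < 1 -> is_derive D1 p (D2 p).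
Proof.
  intros Hp. destruct (sq_pos p Hp) as [Q1 Q2]. unfold D1.
  auto_derive.
  - repeat split; try nra. exists (- / (2 * sqrt p * sqrt (1 - p))). apply Af_deriv; auto.
  - change (Derive (fun x => Af x) p) with (Derive Af p); rewrite (is_derive_unique _ _ _ (Af_deriv p Hp)).
    unfold D2. rewrite sqrt_mult by lra. field. lra.
Qed.

Lemma DJ_eq p : 0 < p < 1 -> Derive Jfun p = D1 p.
Proof. intros; apply is_derive_unique, J_deriv; auto. Qed.

Lemma DDJ_eq p : 0 < p < 1 -> Derive (Derive Jfun) p = D2 p.
Proof.
  intros Hp. rewrite (Derive_ext_loc _ D1).
  apply is_derive_unique, D1_deriv; auto.
  apply (locally_interval _ p (Finite 0) (Finite 1)); simpl; try lra.
  intros y H1 H2. apply DJ_eq; lra.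
Qed.

Lemma asin_le x y : -1 <= x -> x <= y -> y <= 1 -> asin x <= asin y.
Proof.
  intros H1 H2 H3. destruct (Rle_or_lt (asin x) (asin y)) as [H|H]; auto.
  exfalso. pose proof (asin_bound x). pose proof (asin_bound y).
  pose proof (sin_increasing_1 (asin y) (asin x) ltac:(lra) ltac:(lra) ltac:(lra) ltac:(lra) H).
  rewrite !sin_asin in H5 by lra. lra.
Qed.

Lemma c0_nonneg : 0 <= c0.
Proof.
  unfold c0. rewrite <- asin_0. apply asin_le; try lra.
  apply sqrt_pos. rewrite <- sqrt_1. apply sqrt_le_1_alt. lra.
Qed.

Lemma sqrt_le1 x : x <= 1 -> sqrt x <= 1.
Proof. intros. rewrite <- sqrt_1. apply sqrt_le_1_alt. lra. Qed.

Lemma Jfun_nonneg p : 0 < p < 1 -> 0 <= Jfun p.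
Proof.
  intros Hp. unfold Jfun. fold c0. pose proof c0_nonneg.
  assert (0 <= sqrt ((1 - p) * p)) by apply sqrt_pos.
  assert (HA0 : 0 <= asin (sqrt (1 - p))).
  { rewrite <- asin_0. apply asin_le; try lra. apply sqrt_pos. apply sqrt_le1; lra. }
  destruct (Rle_or_lt p (/ 2)).
  - assert (0 <= (1 - 2 * p) * asin (sqrt (1 - p))) by (apply Rmult_le_pos; lra). nra.
  - assert (asin (sqrt (1 - p)) <= c0).
    { unfold c0. apply asin_le. pose proof (sqrt_pos (1 - p)); lra. apply sqrt_le_1_alt; lra.
      apply sqrt_le1; lra. }
    nra.
Qed.

Lemma D1_mono x y : 0 < x -> x <= y -> y < 1 -> D1 x <= D1 y.
Proof.
  intros. unfold D1, Af. assert (asin (sqrt (1 - y)) <= asin (sqrt (1 - x))).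
  { apply asin_le. pose proof (sqrt_pos (1 - y)); lra. apply sqrt_le_1_alt; lra. apply sqrt_le1; lra. }
  lra.
Qed.

Lemma D1_le0 p : 0 < p <= / 2 -> D1 p <= 0.
Proof.
  intros. unfold D1, Af, c0. assert (asin (sqrt (/ 2)) <= asin (sqrt (1 - p))).
  { apply asin_le. pose proof (sqrt_pos (/2)); lra. apply sqrt_le_1_alt; lra. apply sqrt_le1; lra. }
  lra.
Qed.

Lemma D1_ge0 p : / 2 <= p < 1 -> 0 <= D1 p.
Proof.
  intros. unfold D1, Af, c0. assert (asin (sqrt (1 - p)) <= asin (sqrt (/ 2))).
  { apply asin_le. pose proof (sqrt_pos (1 - p)); lra. apply sqrt_le_1_alt; lra. apply sqrt_le1; lra. }
  lra.
Qed.

Lemma glue (f f1 f2 : R -> R) (x l dl : R) : 0 < dl ->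
  (forall y, x - dl < y <= x -> f y = f1 y) -> (forall y, x <= y < x + dl -> f y = f2 y) ->
  is_derive f1 x l -> is_derive f2 x l -> is_derive f x l.
Proof.
  intros Hd E1 E2 H1 H2. rewrite is_derive_Reals in *.
  intros e He. destruct (H1 e He) as [d1 P1]. destruct (H2 e He) as [d2 P2].
  assert (Hm : 0 < Rmin dl (Rmin d1 d2)).
  { destruct d1, d2; simpl. repeat apply Rmin_glb_lt; auto. }
  exists (mkposreal _ Hm). simpl. intros h hne hlt.
  pose proof (Rmin_l dl (Rmin d1 d2)). pose proof (Rmin_r dl (Rmin d1 d2)).
  pose proof (Rmin_l d1 d2). pose proof (Rmin_r d1 d2).
  destruct (Rlt_or_le h 0) as [Hh|Hh].
  - rewrite Rabs_left in hlt by auto.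
    rewrite (E1 (x + h)) by lra. rewrite (E1 x) by lra. apply P1; auto.
    rewrite Rabs_left by auto. lra.
  - assert (0 < h) by (destruct Hh; auto; congruence).
    rewrite Rabs_right in hlt by lra.
    rewrite (E2 (x + h)) by lra. rewrite (E2 x) by lra. apply P2; auto.
    rewrite Rabs_right by lra. lra.
Qed.

Lemma quad_deriv (A B C c p : R) : is_derive (fun y => A + B * (y - c) + / 2 * C * (y - c) ^ 2) p (B + C * (p - c)).
Proof. auto_derive; auto. field. Qed.

Section Eps.
Variable eps : R.
Hypothesis Heps : 0 < eps < / 2.

Definition Pl y := Jfun eps + D1 eps * (y - eps) + / 2 * D2 eps * (y - eps) ^ 2.
Definition Pr y := Jfun (1 - eps) + D1 (1 - eps) * (y - (1 - eps)) + / 2 * D2 (1 - eps) * (y - (1 - eps)) ^ 2.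

Lemma Jeps_left p : p < eps -> Jeps eps p = Pl p.
Proof.
  intros. unfold Jeps, Pl. destruct (Rlt_dec p eps); [|lra].
  rewrite DJ_eq, DDJ_eq by lra. reflexivity.
Qed.
Lemma Jeps_mid p : eps <= p <= 1 - eps -> Jeps eps p = Jfun p.
Proof.
  intros. unfold Jeps. destruct (Rlt_dec p eps); [lra|]. destruct (Rlt_dec (1 - eps) p); [lra|]. auto.
Qed.
Lemma Jeps_right p : 1 - eps < p -> Jeps eps p = Pr p.
Proof.
  intros. unfold Jeps, Pr. destruct (Rlt_dec p eps); [lra|]. destruct (Rlt_dec (1 - eps) p); [|lra].
  rewrite DJ_eq, DDJ_eq by lra. reflexivity.
Qed.

Definition gJ p := if Rlt_dec p eps then D1 eps + D2 eps * (p - eps)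
  else if Rlt_dec (1 - eps) p then D1 (1 - eps) + D2 (1 - eps) * (p - (1 - eps)) else D1 p.

Lemma Jeps_deriv p : is_derive (Jeps eps) p (gJ p).
Proof.
  destruct (Rlt_or_le p eps) as [H1|H1].
  - unfold gJ. destruct (Rlt_dec p eps); [|lra].
    apply (is_derive_ext_loc Pl). apply (locally_interval _ p m_infty (Finite eps)); simpl; auto.
    intros y _ Hy. symmetry. apply Jeps_left; auto.
    apply quad_deriv.
  - destruct (Rlt_or_le (1 - eps) p) as [H2|H2].
    + unfold gJ. destruct (Rlt_dec p eps); [lra|]. destruct (Rlt_dec (1 - eps) p); [|lra].
      apply (is_derive_ext_loc Pr). apply (locally_interval _ p (Finite (1 - eps)) p_infty); simpl; auto.
      intros y Hy _. symmetry. apply Jeps_right; auto.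
      apply quad_deriv.
    + unfold gJ. destruct (Rlt_dec p eps); [lra|]. destruct (Rlt_dec (1 - eps) p); [lra|].
      destruct H1 as [H1|H1]; [destruct H2 as [H2|H2]|].
      * apply (is_derive_ext_loc Jfun). apply (locally_interval _ p (Finite eps) (Finite (1 - eps))); simpl; auto.
        intros y Hy Hy'. symmetry. apply Jeps_mid; lra.
        apply J_deriv; lra.
      * subst p. apply (glue _ Jfun Pr _ _ (1 - 2 * eps)). lra.
        intros; apply Jeps_mid; lra.
        intros y Hy. destruct (Req_dec y (1 - eps)). subst y. rewrite Jeps_mid by lra. unfold Pr. ring.
        apply Jeps_right; lra.
        apply J_deriv; lra.
        pose proof (quad_deriv (Jfun (1 - eps)) (D1 (1 - eps)) (D2 (1 - eps)) (1 - eps) (1 - eps)) as Q.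
        replace (D1 (1 - eps) + D2 (1 - eps) * (1 - eps - (1 - eps))) with (D1 (1 - eps)) in Q by ring. exact Q.
      * subst p. apply (glue _ Pl Jfun _ _ (1 - 2 * eps)). lra.
        intros y Hy. destruct (Req_dec y eps). subst y. rewrite Jeps_mid by lra. unfold Pl. ring.
        apply Jeps_left; lra.
        intros; apply Jeps_mid; lra.
        pose proof (quad_deriv (Jfun eps) (D1 eps) (D2 eps) eps eps) as Q.
        replace (D1 eps + D2 eps * (eps - eps)) with (D1 eps) in Q by ring. exact Q.
        apply J_deriv; lra.
Qed.

Lemma dJeps_eq p : dJeps eps p = gJ p.
Proof. unfold dJeps. apply is_derive_unique, Jeps_deriv. Qed.

Definition sE := sqrt (eps * (1 - eps)).
Lemma sE_pos : 0 < sE.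
Proof. unfold sE. apply sqrt_lt_R0. nra. Qed.
Lemma D2a : D2 eps = / sE.
Proof. reflexivity. Qed.
Lemma D2b : D2 (1 - eps) = / sE.
Proof. unfold D2, sE. f_equal. f_equal. ring. Qed.

Lemma gJ_mono x y : x <= y -> gJ x <= gJ y.
Proof.
  intros Hxy. pose proof sE_pos. pose proof D2a. pose proof D2b.
  assert (Hi : 0 < / sE) by (apply Rinv_0_lt_compat; auto).
  assert (M1 : D1 eps <= D1 (1 - eps)) by (apply D1_mono; lra).
  unfold gJ.
  destruct (Rlt_dec x eps); destruct (Rlt_dec y eps); try destruct (Rlt_dec (1 - eps) x);
    try destruct (Rlt_dec (1 - eps) y); try lra;
  rewrite ?D2a, ?D2b in *; try nra.
  - assert (D1 eps <= D1 y) by (apply D1_mono; lra). nra.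
  - assert (D1 x <= D1 (1 - eps)) by (apply D1_mono; lra). nra.
  - apply D1_mono; lra.
Qed.

Lemma Jeps_convex x y : Jeps eps x - Jeps eps y <= dJeps eps x * (x - y).
Proof.
  rewrite dJeps_eq.
  destruct (MVT_gen (Jeps eps) y x gJ) as [c [Hc E]].
  { intros; apply Jeps_deriv. }
  { intros z _. apply continuity_pt_filterlim. apply (ex_derive_continuous (V:=R_NormedModule)).
    exists (gJ z). apply Jeps_deriv. }
  rewrite E. destruct (Rle_or_lt y x).
  - rewrite Rmin_left, Rmax_right in Hc by lra.
    assert (gJ c <= gJ x) by (apply gJ_mono; lra). nra.
  - rewrite Rmin_right, Rmax_left in Hc by lra.
    assert (gJ x <= gJ c) by (apply gJ_mono; lra). nra.
Qed.

Lemma Jeps_nonneg_and x : 0 <= Jeps eps x /\ (Rmin x 0) ^ 2 <= 2 * sE * Jeps eps x /\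
   (Rmax (x - 1) 0) ^ 2 <= 2 * sE * Jeps eps x.
Proof.
  pose proof sE_pos. pose proof D2a. pose proof D2b.
  assert (Ja : 0 <= Jfun eps) by (apply Jfun_nonneg; lra).
  assert (Jb : 0 <= Jfun (1 - eps)) by (apply Jfun_nonneg; lra).
  assert (Da : D1 eps <= 0) by (apply D1_le0; lra).
  assert (Db : 0 <= D1 (1 - eps)) by (apply D1_ge0; lra).
  destruct (Rlt_or_le x eps) as [L1|L1].
  - rewrite Jeps_left by exact L1. unfold Pl. rewrite D2a.
    assert (Q : 2 * sE * (/ 2 * / sE * (x - eps) ^ 2) = (x - eps) ^ 2) by (field; lra).
    assert (0 <= D1 eps * (x - eps)) by nra.
    assert (0 <= / 2 * / sE * (x - eps) ^ 2).
    { apply Rmult_le_pos. apply Rmult_le_pos. lra. left; apply Rinv_0_lt_compat; auto. apply pow2_ge_0. }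
    split. lra.
    assert (X : (x - eps) ^ 2 <= 2 * sE * (Jfun eps + D1 eps * (x - eps) + / 2 * / sE * (x - eps) ^ 2)).
    { rewrite !Rmult_plus_distr_l, Q. nra. }
    split.
    + unfold Rmin. destruct (Rle_dec x 0). nra. nra.
    + unfold Rmax. destruct (Rle_dec (x - 1) 0). nra. lra.
  - destruct (Rlt_or_le (1 - eps) x) as [L2|L2].
    + rewrite Jeps_right by exact L2. unfold Pr. rewrite D2b.
      assert (Q : 2 * sE * (/ 2 * / sE * (x - (1 - eps)) ^ 2) = (x - (1 - eps)) ^ 2) by (field; lra).
      assert (0 <= D1 (1 - eps) * (x - (1 - eps))) by nra.
      assert (0 <= / 2 * / sE * (x - (1 - eps)) ^ 2).
      { apply Rmult_le_pos. apply Rmult_le_pos. lra. left; apply Rinv_0_lt_compat; auto. apply pow2_ge_0. }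
      split. lra.
      assert (X : (x - (1 - eps)) ^ 2 <= 2 * sE * (Jfun (1 - eps) + D1 (1 - eps) * (x - (1 - eps)) + / 2 * / sE * (x - (1 - eps)) ^ 2)).
      { rewrite !Rmult_plus_distr_l, Q. nra. }
      split.
      * unfold Rmin. destruct (Rle_dec x 0). lra. nra.
      * unfold Rmax. destruct (Rle_dec (x - 1) 0). nra. nra.
    + rewrite Jeps_mid by lra. assert (0 <= Jfun x) by (apply Jfun_nonneg; lra).
      split. auto. split.
      * unfold Rmin. destruct (Rle_dec x 0). lra. nra.
      * unfold Rmax. destruct (Rle_dec (x - 1) 0). nra. lra.
Qed.

End Eps.

Lemma Fpot_ineq eta a b : 0 < eta ->
  Fpot eta a <= Fpot eta b + (dFc eta a + dFe eta b) * (a - b).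
Proof.
  intros He. unfold Fpot, dFc, dFe.
  assert (HK : 0 < / (4 * eta ^ 2)) by (apply Rinv_0_lt_compat; nra).
  set (K := / (4 * eta ^ 2)) in *.
  assert (E : K * b ^ 2 * (b - 1) ^ 2 + (K * (4 * a ^ 3 - 6 * a ^ 2 + 3 * a) + - K * b) * (a - b)
              - K * a ^ 2 * (a - 1) ^ 2 =
              K * ((a - b) ^ 2 * ((b - a + (2 * a - 1)) ^ 2 + / 2 * (2 * a - 1) ^ 2) + / 2 * (a - b) ^ 2))
    by (field).
  assert (0 <= K * ((a - b) ^ 2 * ((b - a + (2 * a - 1)) ^ 2 + / 2 * (2 * a - 1) ^ 2) + / 2 * (a - b) ^ 2)).
  { apply Rmult_le_pos. lra. apply Rplus_le_le_0_compat. apply Rmult_le_pos. apply pow2_ge_0.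
    apply Rplus_le_le_0_compat. apply pow2_ge_0. apply Rmult_le_pos. lra. apply pow2_ge_0.
    apply Rmult_le_pos. lra. apply pow2_ge_0. }
  lra.
Qed.

Lemma Fpot_nonneg eta a : 0 < eta -> 0 <= Fpot eta a.
Proof.
  intros He. unfold Fpot.
  assert (HK : 0 < / (4 * eta ^ 2)) by (apply Rinv_0_lt_compat; nra).
  apply Rmult_le_pos. apply Rmult_le_pos. lra. apply pow2_ge_0. apply pow2_ge_0.
Qed.

Ltac good := solve [let e := fresh "e" in intros e; cbv beta;
  unfold Fpot, dFc, dFe, p1, aff; solve_poly].

Section Step.
Variables (d : nat) (M : smesh d) (eta eps dt : R).
Hypotheses (HM : valid_mesh M) (Heta : 0 < eta) (Hdt : 0 < dt) (Heps : 0 < eps < / 2).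

Lemma grad_sub v w e c : grad M (fun i => v i - w i) e c = grad M v e c - grad M w e c.
Proof. unfold grad, loc, Rdiv. ring. Qed.

Lemma energy_nonneg phi : 0 <= energy M eta phi.
Proof.
  unfold energy. apply omega_nonneg; auto. good.
  intros e t _ _. apply Rplus_le_le_0_compat.
  apply Rmult_le_pos. lra. apply rsum_nonneg. intros; apply pow2_ge_0.
  apply Fpot_nonneg; auto.
Qed.

Definition adiss (phi1 mu1 : nat -> R) :=
  omega_int M (fun e _ => rsum d (fun c => MJ M eps phi1 e c * grad M mu1 e c * grad M mu1 e c)).

Lemma MJ_nonneg phi e c : 0 <= MJ M eps phi e c.
Proof. unfold MJ. destruct (Req_dec_T _ _); apply pow2_ge_0. Qed.

Lemma adiss_nonneg phi1 mu1 : 0 <= adiss phi1 mu1.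
Proof.
  unfold adiss. apply omega_nonneg. good. intros e t _ _. apply rsum_nonneg. intros c _.
  pose proof (MJ_nonneg phi1 e c). rewrite Rmult_assoc. apply Rmult_le_pos; auto.
  apply Rle_0_sqr.
Qed.

Lemma lumped_comm f g : lumped M f g = lumped M g f.
Proof.
  unfold lumped. replace (fun i => f i * g i) with (fun i => g i * f i). auto.
  apply functional_extensionality; intros; ring.
Qed.

Lemma step_energy phi0 phi1 mu1 : Jscheme M eta eps dt phi0 phi1 mu1 ->
  energy M eta phi1 + dt * adiss phi1 mu1 <= energy M eta phi0.
Proof.
  intros [H1 H2].
  specialize (H1 mu1). specialize (H2 (fun i => phi1 i - phi0 i)).
  rewrite lumped_comm in H2. fold (adiss phi1 mu1) in H1.
  assert (HL : lumped M (fun i => phi1 i - phi0 i) mu1 = - dt * adiss phi1 mu1).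
  { set (L := lumped M (fun i => phi1 i - phi0 i) mu1) in *.
    replace L with (dt * (/ dt * L)) by (field; lra).
    replace (/ dt * L) with (- adiss phi1 mu1) by lra. ring. }
  rewrite HL in H2.
  enough (energy M eta phi1 <= energy M eta phi0 + (- dt * adiss phi1 mu1)) by lra.
  rewrite <- H2.
  unfold energy. rewrite <- !omega_add; try good.
  apply omega_mono; try good.
  intros e t _ _. rewrite p1_sub.
  pose proof (Fpot_ineq eta (p1 M phi1 e (aff M e t)) (p1 M phi0 e (aff M e t)) Heta).
  assert (/ 2 * rsum d (fun c => grad M phi1 e c ^ 2) <=
          / 2 * rsum d (fun c => grad M phi0 e c ^ 2) +
          rsum d (fun c => grad M phi1 e c * grad M (fun i => phi1 i - phi0 i) e c)).
  { rewrite <- !rsum_scal, <- rsum_add. apply rsum_le. intros c _. rewrite grad_sub.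
    pose proof (pow2_ge_0 (grad M phi1 e c - grad M phi0 e c)). nra. }
  lra.
Qed.

Definition Sent (phi : nat -> R) := omega_int M (fun e x => p1 M (fun i => Jeps eps (phi i)) e x).

Lemma MJ_key phi mu e c :
  let X := MJ M eps phi e c * grad M (fun i => dJeps eps (phi i)) e c in
  0 <= / 2 * (MJ M eps phi e c * grad M mu e c * grad M mu e c) + / 2 * grad M phi e c ^ 2
       + MJ M eps phi e c * grad M mu e c * grad M (fun i => dJeps eps (phi i)) e c.
Proof.
  intros X.
  assert (HX : X ^ 2 = MJ M eps phi e c * grad M phi e c ^ 2).
  { unfold X, MJ, grad, loc. destruct (Req_dec_T (phi (vtx M e (S c))) (phi (vtx M e 0%nat))) as [Eq|Ne].
    - rewrite Eq. unfold Rdiv. ring.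
    - destruct (Req_dec (dJeps eps (phi (vtx M e (S c)))) (dJeps eps (phi (vtx M e 0%nat)))) as [Eq2|Ne2].
      + rewrite Eq2. unfold Rdiv. rewrite Rminus_diag, Rinv_0. ring.
      + destruct (Req_dec (step M e (S c)) 0) as [Z|Z].
        * unfold Rdiv. rewrite Z, Rinv_0. ring.
        * unfold Rdiv. field. split; auto. intro Q; apply Ne2; lra. }
  pose proof (MJ_nonneg phi e c).
  set (m := MJ M eps phi e c) in *. set (g := grad M mu e c). set (f := grad M phi e c) in *.
  replace (m * g * grad M (fun i => dJeps eps (phi i)) e c) with (X * g) by (unfold X; ring).
  assert (Y : (X * g) ^ 2 <= (/ 2 * (m * g * g) + / 2 * f ^ 2) ^ 2).
  { replace ((X * g) ^ 2) with (X ^ 2 * g ^ 2) by ring. rewrite HX.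
    pose proof (pow2_ge_0 (m * g * g - f ^ 2)). nra. }
  assert (Z : 0 <= / 2 * (m * g * g) + / 2 * f ^ 2).
  { pose proof (pow2_ge_0 f). pose proof (pow2_ge_0 g). nra. }
  destruct (Rle_or_lt 0 (X * g)). lra.
  assert (- (X * g) <= / 2 * (m * g * g) + / 2 * f ^ 2).
  { apply Rsqr_incr_0_var. unfold Rsqr. nra. auto. }
  lra.
Qed.

Lemma step_entropy phi0 phi1 mu1 : Jscheme M eta eps dt phi0 phi1 mu1 ->
  Sent phi1 <= Sent phi0 + dt * (/ 2 * adiss phi1 mu1 + energy M eta phi1).
Proof.
  intros [H1 _]. set (psi := fun i => dJeps eps (phi1 i)). specialize (H1 psi).
  set (b := omega_int M (fun e _ => rsum d (fun c => MJ M eps phi1 e c * grad M mu1 e c * grad M psi e c))) in *.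
  assert (HL : lumped M (fun i => phi1 i - phi0 i) psi = - dt * b).
  { set (L := lumped M (fun i => phi1 i - phi0 i) psi) in *.
    replace L with (dt * (/ dt * L)) by (field; lra).
    replace (/ dt * L) with (- b) by lra. ring. }
  assert (S1 : Sent phi1 <= Sent phi0 + lumped M (fun i => phi1 i - phi0 i) psi).
  { unfold Sent, lumped. rewrite <- omega_add; try good. apply omega_mono; try good.
    intros e t He Ht. rewrite <- p1_add. apply p1_mono; auto. intros i.
    pose proof (Jeps_convex eps Heps (phi1 i) (phi0 i)). unfold psi. lra. }
  set (Phi := omega_int M (fun e _ => rsum d (fun c => grad M phi1 e c ^ 2))).
  assert (S2 : 0 <= / 2 * adiss phi1 mu1 + / 2 * Phi + b).
  { unfold adiss, Phi, b. rewrite <- !omega_scal, <- !omega_add; try good.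
    apply omega_nonneg; try good. intros e t _ _. cbv beta.
    rewrite <- !rsum_scal, <- !rsum_add. apply rsum_nonneg. intros c _.
    apply MJ_key. }
  assert (S3 : Phi <= 2 * energy M eta phi1).
  { unfold Phi, energy. rewrite <- omega_scal; try good. apply omega_mono; try good.
    intros e t _ _. pose proof (Fpot_nonneg eta (p1 M phi1 e (aff M e t)) Heta). lra. }
  rewrite HL in S1.
  assert (dt * (- b) <= dt * (/ 2 * adiss phi1 mu1 + energy M eta phi1)).
  { apply Rmult_le_compat_l; lra. }
  lra.
Qed.

Lemma final_bound phi :
  omega_int M (fun e x => (p1 M (fun i => Rmin (phi i) 0) e x) ^ 2) <= 2 * sE eps * Sent phi /\
  omega_int M (fun e x => (p1 M (fun i => Rmax (phi i - 1) 0) e x) ^ 2) <= 2 * sE eps * Sent phi.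
Proof.
  unfold Sent. rewrite <- omega_scal; [|good]. split.
  - apply omega_mono; try good.
    intros e t He Ht; cbv beta. eapply Rle_trans. apply p1_jensen; auto.
    rewrite <- p1_scal; apply p1_mono; auto; intros i; apply (Jeps_nonneg_and eps Heps).
  - apply omega_mono; try good.
    intros e t He Ht; cbv beta. eapply Rle_trans. apply p1_jensen; auto.
    rewrite <- p1_scal; apply p1_mono; auto; intros i; apply (Jeps_nonneg_and eps Heps).
Qed.

End Step.

Theorem corollary2 :
  forall (d : nat) (eta T : R),
    (1 <= d <= 3)%nat -> 0 < eta -> 0 < T ->
    exists Cf : R -> R -> R,
      forall (M : smesh d) (N : nat) (eps : R) (phi mu : nat -> nat -> R) (n : nat),
        valid_mesh M ->
        (0 < N)%nat -> (n < N)%nat ->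
        0 < eps < / 2 ->
        (forall k, (k <= n)%nat ->
           Jscheme M eta eps (T / INR N) (phi k) (phi (S k)) (mu (S k))) ->
        let C := Cf (energy M eta (phi O))
                    (omega_int M (fun e x => p1 M (fun i => Jeps eps (phi O i)) e x)) in
        omega_int M (fun e x => (p1 M (fun i => Rmin (phi (S n) i) 0) e x) ^ 2)
          <= C * sqrt (eps * (1 - eps)) /\
        omega_int M (fun e x => (p1 M (fun i => Rmax (phi (S n) i - 1) 0) e x) ^ 2)
          <= C * sqrt (eps * (1 - eps)) /\
        C * sqrt (eps * (1 - eps)) <= C * sqrt eps.
Proof.
  intros d eta T Hd Heta HT.
  exists (fun E J => 2 * (Rabs J + (/ 2 + T) * Rabs E)).
  intros M N eps phi mu n HM HN Hn Heps Hsch. cbv zeta.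
  assert (HNr : 0 < INR N) by (apply lt_0_INR; lia).
  set (dt := T / INR N) in *.
  assert (Hdt : 0 < dt) by (unfold dt; apply Rdiv_lt_0_compat; auto).
  set (E0 := energy M eta (phi O)).
  assert (Inv : forall k, (k <= S n)%nat ->
     Sent d M eps (phi k) <= Sent d M eps (phi O) + / 2 * (E0 - energy M eta (phi k)) + INR k * dt * E0
     /\ energy M eta (phi k) <= E0).
  { induction k; intros Hk.
    - simpl. unfold E0. lra.
    - destruct IHk as [I1 I2]. lia.
      pose proof (Hsch k ltac:(lia)) as Hs.
      pose proof (step_energy d M eta eps dt Heta Hdt _ _ _ Hs) as SE.
      pose proof (step_entropy d M eta eps dt HM Heta Hdt Heps _ _ _ Hs) as ST.
      pose proof (adiss_nonneg d M eps (phi (S k)) (mu (S k))).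
      assert (0 <= dt * adiss d M eps (phi (S k)) (mu (S k))) by (apply Rmult_le_pos; lra).
      assert (dt * energy M eta (phi (S k)) <= dt * E0) by (apply Rmult_le_compat_l; lra).
      rewrite S_INR. split; nra. }
  destruct (Inv (S n) (le_n _)) as [I1 I2].
  pose proof (energy_nonneg d M eta Heta (phi (S n))).
  pose proof (energy_nonneg d M eta Heta (phi O)) as HE0. fold E0 in HE0.
  assert (HT2 : INR (S n) * dt <= T).
  { unfold dt. assert (INR (S n) <= INR N) by (apply le_INR; lia).
    apply (Rmult_le_reg_r (INR N)); auto.
    replace (INR (S n) * (T / INR N) * INR N) with (INR (S n) * T) by (field; lra). nra. }
  set (S0 := omega_int M (fun e x => p1 M (fun i => Jeps eps (phi O i)) e x)).
  assert (HS : Sent d M eps (phi (S n)) <= Rabs S0 + (/ 2 + T) * Rabs E0).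
  { rewrite (Rabs_right E0) by lra. pose proof (Rle_abs S0).
    change (Sent d M eps (phi O)) with S0 in I1.
    assert (INR (S n) * dt * E0 <= T * E0) by (apply Rmult_le_compat_r; lra). nra. }
  pose proof (sE_pos eps Heps) as Hs.
  destruct (final_bound d M eps HM Heps (phi (S n))) as [F1 F2].
  unfold sE in *.
  set (sq := sqrt (eps * (1 - eps))) in *.
  assert (HC : 0 <= 2 * (Rabs S0 + (/ 2 + T) * Rabs E0)).
  { pose proof (Rabs_pos S0). pose proof (Rabs_pos E0). nra. }
  split; [|split].
  - eapply Rle_trans. apply F1. nra.
  - eapply Rle_trans. apply F2. nra.
  - apply Rmult_le_compat_l; auto. unfold sq. apply sqrt_le_1_alt. nra.
Qed.
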